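(* Let $n\ge1$, $\preceq$ an admissible order on $L([0,1])$ and $F\colon L([0,1])^2\to L([0,1])$, $G\colon L([0,1])^n\to L([0,1])$. (i) The IV Sugeno-like $FG$-functional $\mathbf S_m^{F,\vee}$ satisfies: (a) $\mathbf S_m^{F,\vee}\succeq\wedge$ for every IV fuzzy measure $m$ whenever $F(X,\mathbf1)\succeq X$ for all $X$ and $F$ is non-decreasing in the second variable; (a$^s$) $\mathbf S_m^{F,\vee}\succeq\wedge$ for every symmetric $m$ whenever $F(X,\mathbf1)\succeq X$ for all $X$; (b) $\mathbf S_m^{F,\vee}\preceq\vee$ for every $m$ whenever $F(X,\mathbf1)\preceq X$ for all $X$ and $F$ is non-decreasing in the second variable; (b$^s$) $\mathbf S_m^{F,\vee}\preceq\vee$ for every symmetric $m$ whenever $F(X,Y)\preceq X$ for all $X,Y$; (c) $\mathbf S_m^{F,\vee}$ is internal for every $m$ whenever $F(X,\mathbf1)=X$ for all $X$ and $F$ is non-decreasing in the second variable; (c$^s$) $\mathbf S_m^{F,\vee}$ is internal for every symmetric $m$ whenever $F(X,Y)\preceq X$ and $F(X,\mathbf1)=X$ for all $X,Y$. (ii) The functional $\mathbf S_m^{\wedge,G}$ satisfies: (a) $\mathbf S_m^{\wedge,G}\succeq\wedge$ for every $m$ whenever $G=f\circ\mathrm{Proj}_1$ or $G=f\circ\vee$ for some $f\colon L([0,1])\to L([0,1])$ with $f\succeq\mathrm{Id}$; (b) $\mathbf S_m^{\wedge,G}\preceq\vee$ for every $m$ whenever $G=f\circ\mathrm{Proj}_1$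 or $G=f\circ\vee$ with $f\preceq\mathrm{Id}$; (c) $\mathbf S_m^{\wedge,G}$ is internal for every $m$ whenever $G=\mathrm{Proj}_1$ or $G=\vee$. (iii) $\mathbf S_m^{\wedge,\vee}$ is internal for every $m$.
   Context: $N=\{1,\dots,n\}$. $L([0,1])=\{[a,b]:0\le a\le b\le1\}$, $\mathbf0=[0,0]$, $\mathbf1=[1,1]$. An admissible order $\preceq$ is a total order on $L([0,1])$ with $[a,b]\preceq[c,d]$ whenever $a\le c$, $b\le d$. $\vee,\wedge$ denote maximum and minimum w.r.t. $\preceq$; monotonicity is w.r.t. $\preceq$; $\mathrm{Proj}_1(X_1,\dots,X_n)=X_1$; $f\succeq\mathrm{Id}$ means $f(X)\succeq X$ for all $X$. $\mathbf S\succeq\wedge$ means $\mathbf S(X_1,\dots,X_n)\succeq\wedge(X_1,\dots,X_n)$ for all inputs; $\mathbf S\preceq\vee$ analogously; internal means both. An IV fuzzy measure w.r.t. $\preceq$ is $m\colon2^N\to L([0,1])$, $m(\emptyset)=\mathbf0$, $m(N)=\mathbf1$, $m(A)\preceq m(B)$ for $A\subseteq B$; symmetric if $m(A)=m(B)$ whenever $|A|=|B|$. For a permutation $\sigma$, $E_{\sigma(i)}=\{\sigma(i),\dots,\sigma(n)\}$. $\mathbf S_m^{F,G}(X_1,\dots,X_n)=G\big(F(X_{\sigma(1)},m(E_{\sigma(1)})),\dots,F(X_{\sigma(n)},m(E_{\sigma(n)}))\big)$ with $\sigma$ any permutation such that $X_{\sigma(1)}\preceq\dots\preceq X_{\sigma(n)}$;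 it is defined when this value does not depend on the choice of $\sigma$ for all inputs. *)

(* Defs.v *)
From Stdlib Require Import Reals.
From mathcomp Require Import all_boot perm.
Set Implicit Arguments. Unset Strict Implicit. Unset Printing Implicit Defensive.

(* L([0,1]) : closed subintervals [a,b] of [0,1] *)
Record Ival := mkIval { lo : R; hi : R;
  Ival_wf : Rle R0 lo /\ Rle lo hi /\ Rle hi R1 }.

Definition I0 : Ival := @mkIval R0 R0 (conj (Rle_refl R0) (conj (Rle_refl R0) Rle_0_1)).
Definition I1 : Ival := @mkIval R1 R1 (conj Rle_0_1 (conj (Rle_refl R1) (Rle_refl R1))).

Definition admissible (le : Ival -> Ival -> bool) : Prop :=
  [/\ (forall X, le X X),
      (forall X Y, le X Y -> le Y X -> X = Y),
      (forall X Y Z, le X Y -> le Y Z -> le X Z),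
      (forall X Y, le X Y || le Y X) &
      (forall X Y, Rle (lo X) (lo Y) -> Rle (hi X) (hi Y) -> le X Y)].

Definition max2 (le : Ival -> Ival -> bool) (X Y : Ival) : Ival := if le X Y then Y else X.
Definition min2 (le : Ival -> Ival -> bool) (X Y : Ival) : Ival := if le X Y then X else Y.

(* n-ary maximum / minimum w.r.t. le  (0 and 1 are the bottom and top of an admissible order) *)
Definition vee (le : Ival -> Ival -> bool) {n : nat} (X : 'I_n -> Ival) : Ival :=
  foldr (max2 le) I0 [seq X i | i <- enum 'I_n].
Definition wedge (le : Ival -> Ival -> bool) {n : nat} (X : 'I_n -> Ival) : Ival :=
  foldr (min2 le) I1 [seq X i | i <- enum 'I_n].

Definition proj1 {n : nat} (hn : (0 < n)%N) (X : 'I_n -> Ival) : Ival := X (Ordinal hn).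

Definition fuzzy_measure (le : Ival -> Ival -> bool) {n : nat} (m : {set 'I_n} -> Ival) : Prop :=
  [/\ m set0 = I0, m setT = I1 &
      (forall A B : {set 'I_n}, A \subset B -> le (m A) (m B))].
Definition symmetric_measure {n : nat} (m : {set 'I_n} -> Ival) : Prop :=
  forall A B : {set 'I_n}, #|A| = #|B| -> m A = m B.

Definition sorting (le : Ival -> Ival -> bool) {n : nat} (X : 'I_n -> Ival) (s : {perm 'I_n}) : Prop :=
  forall i j : 'I_n, (i <= j)%N -> le (X (s i)) (X (s j)).

Definition Eset {n : nat} (s : {perm 'I_n}) (i : 'I_n) : {set 'I_n} :=
  [set s k | k : 'I_n & (i <= k)%N].

(* value of S_m^{F,G}(X) computed with the permutation s *)
Definition Sval {n : nat} (m : {set 'I_n} -> Ival) (F : Ival -> Ival -> Ival)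
  (G : ('I_n -> Ival) -> Ival) (X : 'I_n -> Ival) (s : {perm 'I_n}) : Ival :=
  G (fun i => F (X (s i)) (m (Eset s i))).

(* S_m^{F,G} is defined: the value does not depend on the sorting permutation, for all inputs *)
Definition S_defined (le : Ival -> Ival -> bool) {n : nat} (m : {set 'I_n} -> Ival)
  (F : Ival -> Ival -> Ival) (G : ('I_n -> Ival) -> Ival) : Prop :=
  forall X s1 s2, sorting le X s1 -> sorting le X s2 -> Sval m F G X s1 = Sval m F G X s2.

Definition S_ge_wedge (le : Ival -> Ival -> bool) {n : nat} (m : {set 'I_n} -> Ival)
  (F : Ival -> Ival -> Ival) (G : ('I_n -> Ival) -> Ival) : Prop :=
  S_defined le m F G ->
  forall X s, sorting le X s -> le (wedge le X) (Sval m F G X s).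

Definition S_le_vee (le : Ival -> Ival -> bool) {n : nat} (m : {set 'I_n} -> Ival)
  (F : Ival -> Ival -> Ival) (G : ('I_n -> Ival) -> Ival) : Prop :=
  S_defined le m F G ->
  forall X s, sorting le X s -> le (Sval m F G X s) (vee le X).

Definition S_internal (le : Ival -> Ival -> bool) {n : nat} (m : {set 'I_n} -> Ival)
  (F : Ival -> Ival -> Ival) (G : ('I_n -> Ival) -> Ival) : Prop :=
  S_ge_wedge le m F G /\ S_le_vee le m F G.

Definition nondecr2 (le : Ival -> Ival -> bool) (F : Ival -> Ival -> Ival) : Prop :=
  forall X Y Z, le Y Z -> le (F X Y) (F X Z).

(* Main.v *)
Require Import Defs.
From Stdlib Require Import Reals Lra.
From mathcomp Require Import all_boot perm.

Set Implicit Arguments.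
Section H.
Variable le : Ival -> Ival -> bool.
Hypothesis adm : admissible le.

Lemma lrefl X : le X X. Proof. by case: adm. Qed.
Lemma ltrans X Y Z : le X Y -> le Y Z -> le X Z.
Proof. case: adm => _ _ t _ _; exact: t. Qed.
Lemma ltot X Y : le X Y || le Y X. Proof. by case: adm. Qed.
Lemma ltop X : le X I1.
Proof. case: adm => _ _ _ _ a; apply: a; case: X => l h [? [? ?]] /=; lra. Qed.
Lemma lbot X : le I0 X.
Proof. case: adm => _ _ _ _ a; apply: a; case: X => l h [? [? ?]] /=; lra. Qed.

Lemma max2_l x y : le x (max2 le x y).
Proof. rewrite /max2; case: ifP => // _; exact: lrefl. Qed.
Lemma max2_r x y : le y (max2 le x y).
Proof. rewrite /max2; case: ifP => h; first exact: lrefl.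
by move: (ltot x y); rewrite h. Qed.
Lemma max2_lub x y z : le x z -> le y z -> le (max2 le x y) z.
Proof. by rewrite /max2; case: ifP. Qed.
Lemma min2_l x y : le (min2 le x y) x.
Proof. rewrite /min2; case: ifP => h; first exact: lrefl.
by move: (ltot x y); rewrite h. Qed.
Lemma min2_r x y : le (min2 le x y) y.
Proof. rewrite /min2; case: ifP => // _; exact: lrefl. Qed.

Lemma fold_max_ub n (X : 'I_n -> Ival) (l : seq 'I_n) i :
  i \in l -> le (X i) (foldr (max2 le) I0 [seq X j | j <- l]).
Proof.
elim: l => //= a l IH; rewrite in_cons => /orP [/eqP ->|/IH h].
  exact: max2_l.
exact: (ltrans h (max2_r _ _)).
Qed.

Lemma fold_max_lub n (X : 'I_n -> Ival) (l : seq 'I_n) Z :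
  (forall i, le (X i) Z) -> le (foldr (max2 le) I0 [seq X j | j <- l]) Z.
Proof.
move=> h; elim: l => /= [|a l IH]; first exact: lbot.
exact: max2_lub.
Qed.

Lemma fold_min_lb n (X : 'I_n -> Ival) (l : seq 'I_n) i :
  i \in l -> le (foldr (min2 le) I1 [seq X j | j <- l]) (X i).
Proof.
elim: l => //= a l IH; rewrite in_cons => /orP [/eqP ->|/IH h].
  exact: min2_l.
exact: (ltrans (min2_r _ _) h).
Qed.

Lemma vee_ub n (X : 'I_n -> Ival) i : le (X i) (vee le X).
Proof. apply: fold_max_ub; by rewrite mem_enum. Qed.
Lemma vee_lub n (X : 'I_n -> Ival) Z : (forall i, le (X i) Z) -> le (vee le X) Z.
Proof. exact: fold_max_lub. Qed.
Lemma wedge_lb n (X : 'I_n -> Ival) i : le (wedge le X) (X i).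
Proof. apply: fold_min_lb; by rewrite mem_enum. Qed.

Lemma min2_top X : min2 le X I1 = X.
Proof. by rewrite /min2 ltop. Qed.

End H.
Arguments ltrans {le} adm {X Y Z}.

Lemma Eset0 n (hn : (0 < n)%N) (s : {perm 'I_n}) : Eset s (Ordinal hn) = setT.
Proof.
apply/setP => x; rewrite inE; apply/imsetP; exists ((s^-1)%g x).
  by rewrite inE. by rewrite permKV.
Qed.


Theorem corollary3 (n : nat) (hn : (0 < n)%N) (le : Ival -> Ival -> bool)
  (F : Ival -> Ival -> Ival) (G : ('I_n -> Ival) -> Ival) :
  admissible le ->
  (* (i) S_m^{F, vee} *)
  ( (* (a) *)
    ((forall X, le X (F X I1)) -> nondecr2 le F ->
       forall m : {set 'I_n} -> Ival, fuzzy_measure le m -> S_ge_wedge le m F (vee le))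
    /\ (* (a^s) *)
    ((forall X, le X (F X I1)) ->
       forall m : {set 'I_n} -> Ival, fuzzy_measure le m -> symmetric_measure m ->
       S_ge_wedge le m F (vee le))
    /\ (* (b) *)
    ((forall X, le (F X I1) X) -> nondecr2 le F ->
       forall m : {set 'I_n} -> Ival, fuzzy_measure le m -> S_le_vee le m F (vee le))
    /\ (* (b^s) *)
    ((forall X Y, le (F X Y) X) ->
       forall m : {set 'I_n} -> Ival, fuzzy_measure le m -> symmetric_measure m ->
       S_le_vee le m F (vee le))
    /\ (* (c) *)
    ((forall X, F X I1 = X) -> nondecr2 le F ->
       forall m : {set 'I_n} -> Ival, fuzzy_measure le m -> S_internal le m F (vee le))
    /\ (* (c^s) *)
    ((forall X Y, le (F X Y) X) -> (forall X, F X I1 = X) ->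
       forall m : {set 'I_n} -> Ival, fuzzy_measure le m -> symmetric_measure m ->
       S_internal le m F (vee le)) )
  /\
  (* (ii) S_m^{wedge, G} *)
  ( (* (a) *)
    (forall f : Ival -> Ival, (forall X, le X (f X)) ->
       (G = (fun X => f (proj1 hn X)) \/ G = (fun X => f (vee le X))) ->
       forall m : {set 'I_n} -> Ival, fuzzy_measure le m -> S_ge_wedge le m (min2 le) G)
    /\ (* (b) *)
    (forall f : Ival -> Ival, (forall X, le (f X) X) ->
       (G = (fun X => f (proj1 hn X)) \/ G = (fun X => f (vee le X))) ->
       forall m : {set 'I_n} -> Ival, fuzzy_measure le m -> S_le_vee le m (min2 le) G)
    /\ (* (c) *)
    ((G = proj1 hn \/ G = vee le) ->
       forall m : {set 'I_n} -> Ival, fuzzy_measure le m -> S_internal le m (min2 le) G) )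
  /\
  (* (iii) S_m^{wedge, vee} *)
  (forall m : {set 'I_n} -> Ival, fuzzy_measure le m -> S_internal le m (min2 le) (vee le)).
Proof.
move=> adm.
set i0 := Ordinal hn.
have geF : forall F' (m : {set 'I_n} -> Ival), fuzzy_measure le m -> (forall X, le X (F' X I1)) ->
    S_ge_wedge le m F' (vee le).
  move=> F' m [_ mT _] hF _ X s _; rewrite /Sval.
  apply: (ltrans adm (wedge_lb adm X (s i0))).
  apply: (ltrans adm (hF _)).
  have := vee_ub adm (fun i => F' (X (s i)) (m (Eset s i))) i0.
  by rewrite /= /i0 (Eset0 hn) mT.
have leF : forall F' (m : {set 'I_n} -> Ival),
    (forall X Y, le (F' X Y) X) -> S_le_vee le m F' (vee le).
  move=> F' m hF _ X s _; rewrite /Sval.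
  apply: vee_lub => // i; apply: (ltrans adm (hF _ _)); exact: vee_ub.
have leFb : forall (m : {set 'I_n} -> Ival), fuzzy_measure le m ->
    (forall X, le (F X I1) X) -> nondecr2 le F -> S_le_vee le m F (vee le).
  move=> m [_ mT _] hF hnd _ X s _; rewrite /Sval.
  apply: vee_lub => // i.
  apply: (ltrans adm (hnd _ _ _ (ltop adm _))).
  apply: (ltrans adm (hF _)); exact: vee_ub.
have minI : forall m : {set 'I_n} -> Ival, fuzzy_measure le m ->
    S_internal le m (min2 le) (vee le).
  move=> m fm; split.
    by apply: (geF _ _ fm) => X; rewrite min2_top //; apply: lrefl.
  by apply: leF => X Y; apply: min2_l.
have minP : forall m : {set 'I_n} -> Ival, fuzzy_measure le m -> forall (X : 'I_n -> Ival) (s : {perm 'I_n}),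
    le (wedge le X) (proj1 hn (fun i => min2 le (X (s i)) (m (Eset s i)))) /\
    le (proj1 hn (fun i => min2 le (X (s i)) (m (Eset s i)))) (vee le X).
  move=> m [_ mT _] X s; rewrite /proj1 (Eset0 hn) mT min2_top //; split.
    exact: wedge_lb. exact: vee_ub.
split; last split.
- split; first by move=> hF _ m fm; exact: (geF _ _ fm).
  split; first by move=> hF m fm _; exact: (geF _ _ fm).
  split; first by move=> hF hnd m fm; exact: leFb.
  split; first by move=> hF m _ _; exact: leF.
  split.
    move=> hF hnd m fm; split; first by apply: (geF _ _ fm) => X; rewrite hF; apply: lrefl.
    by apply: leFb => // X; rewrite hF; apply: lrefl.
  move=> hF h1 m fm _; split; first by apply: (geF _ _ fm) => X; rewrite h1; apply: lrefl.
  exact: leF.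
- split; last split.
  + move=> f hf [->|->] m fm _ X s _; rewrite /Sval.
      exact: (ltrans adm (Logic.proj1 (minP m fm X s)) (hf _)).
    apply: (ltrans adm _ (hf _)).
    apply: (ltrans adm (wedge_lb adm X (s i0))).
    have := vee_ub adm (fun i => min2 le (X (s i)) (m (Eset s i))) i0.
    by case: fm => _ mT _; rewrite /= /i0 (Eset0 hn) mT min2_top.
  + move=> f hf [->|->] m fm _ X s _; rewrite /Sval.
      exact: (ltrans adm (hf _) (Logic.proj2 (minP m fm X s))).
    apply: (ltrans adm (hf _)).
    apply: vee_lub => // i; apply: (ltrans adm (min2_l adm _ _)); exact: vee_ub.
  + move=> [->|->] m fm; last exact: minI.
    split=> _ X s _; rewrite /Sval; [exact: (Logic.proj1 (minP m fm X s))|exact: (Logic.proj2 (minP m fm X s))].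
- exact: minI.
Qed.
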